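(* Let $\mathcal T$ be a theory of $\mathsf{LGI}$ consisting of graded implications and let $\zeta\Rightarrow_e\eta$ be a graded implication. If $\mathcal T\models\zeta\Rightarrow_e\eta$, then $\mathcal T\vdash_{\mathsf{LGI}}\zeta\Rightarrow_t\eta$ for every $t\in[0,1]$ with $t<e$.
   Context: Fix a continuous t-norm $\odot$ on $[0,1]$ and let $c\oplus d = 1-((1-c)\odot(1-d))$. Write $c\odot_{\L} d=\max(c+d-1,0)$, $c\oplus_{\L} d=\min(c+d,1)$. Syntax of $\mathsf{LGI}$: countably many variables $\phi_0,\phi_1,\dots$ and constants $\bot,\top$. Basic expressions are built from variables and constants by binary $\land,\lor,\odot$ and unary $\sim$. A graded implication is written $\alpha\Rightarrow_c\beta$ with $\alpha,\beta$ basic expressions, $c\in[0,1]$. Formulas are built from graded implications by classical $\land,\lor,\lnot$; $\Phi\to\Psi$ abbreviates $\lnot\Phi\lor\Psi$. A theory is a set of formulas. Semantics: an evaluation is a map $v$ from basic expressions to $[0,1]$ with $v(\bot)=0$, $v(\top)=1$, interpreting $\land$ by min, $\lor$ by max, $\odot$ by the t-norm $\odot$, and $\sim$ by $x\mapsto 1-x$. $v$ satisfies $\alpha\Rightarrow_c\beta$ iff $v(\alpha)\le v(\beta)+1-c$; satisfaction extends classically to all formulas. $\mathcal T\models\Phi$ means every evaluation satisfying all elements of $\mathcal T$ satisfies $\Phi$. Calculus $\mathsf{LGI}$: axioms are (i) all substitution instances (by graded implications) of classical propositional tautologies; (ii) for all basic expressions $\alpha,\beta,\gamma$ and $c,d\in[0,1]$: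 ($\land_1$) $(\alpha\Rightarrow_d\beta)\land(\alpha\Rightarrow_d\gamma)\to(\alpha\Rightarrow_d\beta\land\gamma)$; ($\land_2$) $\alpha\land\beta\Rightarrow_1\alpha$; ($\land_3$) $\alpha\land\beta\Rightarrow_1\beta$; ($\lor_1$) $(\alpha\Rightarrow_d\gamma)\land(\beta\Rightarrow_d\gamma)\to(\alpha\lor\beta\Rightarrow_d\gamma)$; ($\lor_2$) $\alpha\Rightarrow_1\alpha\lor\beta$; ($\lor_3$) $\beta\Rightarrow_1\alpha\lor\beta$; ($\odot_1$) $(\top\Rightarrow_c\alpha)\land(\top\Rightarrow_d\beta)\to(\top\Rightarrow_{c\odot d}\alpha\odot\beta)$; ($\odot_2$) $(\alpha\Rightarrow_c\bot)\land(\beta\Rightarrow_d\bot)\to(\alpha\odot\beta\Rightarrow_{c\oplus d}\bot)$; ($\odot_3$) $\top\Rightarrow_1\top\odot\top$; ($\sim_1$) $(\alpha\Rightarrow_d\beta)\to(\sim\beta\Rightarrow_d\sim\alpha)$; ($\sim_2$) $\sim\sim\alpha\Rightarrow_1\alpha$; ($\sim_3$) $\alpha\Rightarrow_1\sim\sim\alpha$; ($\top$) $\alpha\Rightarrow_1\top$; ($\bot$) $\bot\Rightarrow_1\alpha$; (0) $\alpha\Rightarrow_0\beta$; ($c$) $\alpha\Rightarrow_c\alpha$; (inkons) $\lnot(\top\Rightarrow_c\bot)$ for $c>0$; (trans$_1$) $(\alpha\Rightarrow_c\beta)\land(\beta\Rightarrow_d\gamma)\to(\alpha\Rightarrow_{c\odot_{\L}d}\gamma)$;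 (trans$_2$) $(\alpha\Rightarrow_c\bot)\land(\top\Rightarrow_d\beta)\to(\alpha\Rightarrow_{c\oplus_{\L}d}\beta)$; (lin$_1$) $(\alpha\Rightarrow_1\beta)\lor(\beta\Rightarrow_1\alpha)$; (lin$_2$) $(\top\Rightarrow_d\alpha)\lor(\alpha\Rightarrow_{1-d}\bot)$. The only rule is modus ponens. $\mathcal T\vdash_{\mathsf{LGI}}\Phi$ means $\Phi$ has a finite derivation from axioms and elements of $\mathcal T$ by modus ponens. *)

(* Defs.v *)
From Stdlib Require Import Reals.
Open Scope R_scope.

(** * Continuous t-norms on [0,1] (represented as functions R -> R -> R,
      only their behaviour on [0,1] matters). *)
Definition unit_int (x : R) : Prop := 0 <= x <= 1.

Record is_cont_tnorm (tn : R -> R -> R) : Prop := {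
  tn_closed : forall x y, unit_int x -> unit_int y -> unit_int (tn x y);
  tn_comm : forall x y, unit_int x -> unit_int y -> tn x y = tn y x;
  tn_assoc : forall x y z, unit_int x -> unit_int y -> unit_int z ->
               tn x (tn y z) = tn (tn x y) z;
  tn_mono : forall x y z, unit_int x -> unit_int y -> unit_int z ->
               x <= y -> tn x z <= tn y z;
  tn_unit : forall x, unit_int x -> tn x 1 = x;
  tn_cont : forall x y, unit_int x -> unit_int y ->
     forall eps, eps > 0 -> exists delta, delta > 0 /\
       forall x' y', unit_int x' -> unit_int y' ->
         Rabs (x' - x) < delta -> Rabs (y' - y) < delta ->
         Rabs (tn x' y' - tn x y) < eps
}.

Definition tconorm (tn : R -> R -> R) (c d : R) : R := 1 - tn (1 - c) (1 - d).

Definition luk_t (c d : R) : R := Rmax (c + d - 1) 0.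
Definition luk_s (c d : R) : R := Rmin (c + d) 1.

Inductive bexpr : Type :=
| BVar : nat -> bexpr
| BBot : bexpr
| BTop : bexpr
| BAnd : bexpr -> bexpr -> bexpr
| BOr  : bexpr -> bexpr -> bexpr
| BTn  : bexpr -> bexpr -> bexpr
| BNeg : bexpr -> bexpr.

(** formulas: classical combinations of graded implications [GI a c b]
    standing for  a =>_c b  *)
Inductive formula : Type :=
| GI   : bexpr -> R -> bexpr -> formula
| FAnd : formula -> formula -> formula
| FOr  : formula -> formula -> formula
| FNot : formula -> formula.

Definition FImp (P Q : formula) : formula := FOr (FNot P) Q.

Fixpoint wf (P : formula) : Prop :=
  match P with
  | GI _ c _ => unit_int c
  | FAnd P Q | FOr P Q => wf P /\ wf Q
  | FNot P => wf P
  end.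

Definition is_eval (tn : R -> R -> R) (v : bexpr -> R) : Prop :=
  (forall a, unit_int (v a)) /\
  v BBot = 0 /\ v BTop = 1 /\
  (forall a b, v (BAnd a b) = Rmin (v a) (v b)) /\
  (forall a b, v (BOr a b) = Rmax (v a) (v b)) /\
  (forall a b, v (BTn a b) = tn (v a) (v b)) /\
  (forall a, v (BNeg a) = 1 - v a).

Fixpoint sat (v : bexpr -> R) (P : formula) : Prop :=
  match P with
  | GI a c b => v a <= v b + 1 - c
  | FAnd P Q => sat v P /\ sat v Q
  | FOr P Q => sat v P \/ sat v Q
  | FNot P => ~ sat v P
  end.

Definition models (tn : R -> R -> R) (T : formula -> Prop) (P : formula) : Prop :=
  forall v, is_eval tn v -> (forall Q, T Q -> sat v Q) -> sat v P.

(** Boolean evaluation treating graded implications as propositional atoms;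
    a formula is a substitution instance of a classical tautology iff it is
    true under every such atom valuation. *)
Fixpoint beval (f : bexpr -> R -> bexpr -> bool) (P : formula) : bool :=
  match P with
  | GI a c b => f a c b
  | FAnd P Q => andb (beval f P) (beval f Q)
  | FOr P Q => orb (beval f P) (beval f Q)
  | FNot P => negb (beval f P)
  end.

Definition taut_instance (P : formula) : Prop :=
  wf P /\ forall f, beval f P = true.

Inductive LGI_axiom (tn : R -> R -> R) : formula -> Prop :=
| ax_taut : forall P, taut_instance P -> LGI_axiom tn P
| ax_and1 : forall a b g d, unit_int d ->
    LGI_axiom tn (FImp (FAnd (GI a d b) (GI a d g)) (GI a d (BAnd b g)))
| ax_and2 : forall a b, LGI_axiom tn (GI (BAnd a b) 1 a)
| ax_and3 : forall a b, LGI_axiom tn (GI (BAnd a b) 1 b)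
| ax_or1 : forall a b g d, unit_int d ->
    LGI_axiom tn (FImp (FAnd (GI a d g) (GI b d g)) (GI (BOr a b) d g))
| ax_or2 : forall a b, LGI_axiom tn (GI a 1 (BOr a b))
| ax_or3 : forall a b, LGI_axiom tn (GI b 1 (BOr a b))
| ax_tn1 : forall a b c d, unit_int c -> unit_int d ->
    LGI_axiom tn (FImp (FAnd (GI BTop c a) (GI BTop d b)) (GI BTop (tn c d) (BTn a b)))
| ax_tn2 : forall a b c d, unit_int c -> unit_int d ->
    LGI_axiom tn (FImp (FAnd (GI a c BBot) (GI b d BBot)) (GI (BTn a b) (tconorm tn c d) BBot))
| ax_tn3 : LGI_axiom tn (GI BTop 1 (BTn BTop BTop))
| ax_neg1 : forall a b d, unit_int d ->
    LGI_axiom tn (FImp (GI a d b) (GI (BNeg b) d (BNeg a)))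
| ax_neg2 : forall a, LGI_axiom tn (GI (BNeg (BNeg a)) 1 a)
| ax_neg3 : forall a, LGI_axiom tn (GI a 1 (BNeg (BNeg a)))
| ax_top : forall a, LGI_axiom tn (GI a 1 BTop)
| ax_bot : forall a, LGI_axiom tn (GI BBot 1 a)
| ax_zero : forall a b, LGI_axiom tn (GI a 0 b)
| ax_refl : forall a c, unit_int c -> LGI_axiom tn (GI a c a)
| ax_inkons : forall c, unit_int c -> c > 0 -> LGI_axiom tn (FNot (GI BTop c BBot))
| ax_trans1 : forall a b g c d, unit_int c -> unit_int d ->
    LGI_axiom tn (FImp (FAnd (GI a c b) (GI b d g)) (GI a (luk_t c d) g))
| ax_trans2 : forall a b c d, unit_int c -> unit_int d ->
    LGI_axiom tn (FImp (FAnd (GI a c BBot) (GI BTop d b)) (GI a (luk_s c d) b))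
| ax_lin1 : forall a b, LGI_axiom tn (FOr (GI a 1 b) (GI b 1 a))
| ax_lin2 : forall a d, unit_int d ->
    LGI_axiom tn (FOr (GI BTop d a) (GI a (1 - d) BBot)).

Inductive LGI_prf (tn : R -> R -> R) (T : formula -> Prop) : formula -> Prop :=
| prf_ax : forall P, LGI_axiom tn P -> LGI_prf tn T P
| prf_hyp : forall P, T P -> LGI_prf tn T P
| prf_mp : forall P Q, LGI_prf tn T P -> LGI_prf tn T (FImp P Q) -> LGI_prf tn T Q.

(* Main.v *)
Require Import Defs.
From Stdlib Require Import Reals Lra Lia List Classical ClassicalEpsilon Cantor ZArith.
Open Scope R_scope.

Lemma prf_wf tn G (HG : forall P, G P -> wf P) (Htn : is_cont_tnorm tn) P :
  LGI_prf tn G P -> wf P.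
Proof.
  induction 1 as [P HA|P HP|P Q _ IH1 _ IH2].
  - destruct HA; unfold FImp, unit_int in *; simpl; unfold unit_int;
      try (destruct H; assumption);
      repeat split; try lra.
    all: try (apply (tn_closed _ Htn); unfold unit_int; lra).
    all: try (unfold tconorm; pose proof (tn_closed _ Htn (1-c) (1-d)); unfold unit_int in *; lra).
    all: try (unfold luk_t, luk_s, Rmax, Rmin; destruct Rle_dec; lra).
  - auto.
  - unfold FImp in IH2; simpl in IH2; tauto.
Qed.

Lemma prf_mono tn G G' (H : forall P, G P -> G' P) P :
  LGI_prf tn G P -> LGI_prf tn G' P.
Proof.
  induction 1 as [P HA|P HP|P Q _ IH1 _ IH2].
  - now apply prf_ax.
  - apply prf_hyp; auto.
  - exact (prf_mp _ _ _ _ IH1 IH2).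
Qed.

Ltac taut_tac :=
  apply prf_ax, ax_taut; split;
  [ unfold FImp; simpl; repeat split; try tauto; unfold unit_int in *; lra
  | intro f; unfold FImp; simpl;
    repeat match goal with |- context [beval ?g ?X] => destruct (beval g X) end;
    repeat match goal with |- context [?g ?a ?c ?b] =>
      match type of g with (bexpr -> R -> bexpr -> bool) => destruct (g a c b) end end;
    reflexivity ].


Lemma mp2 tn G (HG : forall P, G P -> wf P) (Htn : is_cont_tnorm tn) X Y Z :
  LGI_prf tn G X -> LGI_prf tn G Y -> LGI_prf tn G (FImp (FAnd X Y) Z) -> LGI_prf tn G Z.
Proof.
  intros HX HY HI.
  pose proof (prf_wf _ _ HG Htn _ HX). pose proof (prf_wf _ _ HG Htn _ HY).
  pose proof (prf_wf _ _ HG Htn _ HI). unfold FImp in *; simpl in *.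
  assert (LGI_prf tn G (FImp X (FImp Y (FAnd X Y)))) by taut_tac.
  assert (LGI_prf tn G (FAnd X Y)) by (apply (prf_mp _ _ _ _ HY); apply (prf_mp _ _ _ _ HX); assumption).
  exact (prf_mp _ _ _ _ H3 HI).
Qed.

Lemma prf_grade tn G (HG : forall P, G P -> wf P) (Htn : is_cont_tnorm tn) a c b :
  LGI_prf tn G (GI a c b) -> unit_int c.
Proof. intro H; exact (prf_wf _ _ HG Htn _ H). Qed.

Lemma ptrans tn G (HG : forall P, G P -> wf P) (Htn : is_cont_tnorm tn) a b g c d :
  LGI_prf tn G (GI a c b) -> LGI_prf tn G (GI b d g) -> LGI_prf tn G (GI a (luk_t c d) g).
Proof.
  intros H1 H2. apply (mp2 _ _ HG Htn _ _ _ H1 H2). apply prf_ax, ax_trans1; eapply prf_grade; eauto.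
Qed.

Lemma luk_t_unit c d : unit_int c -> unit_int d -> unit_int (luk_t c d).
Proof. unfold unit_int, luk_t, Rmax; intros; destruct Rle_dec; lra. Qed.

Lemma weaken tn G (HG : forall P, G P -> wf P) (Htn : is_cont_tnorm tn) a b c t :
  LGI_prf tn G (GI a c b) -> 0 <= t -> t <= c -> LGI_prf tn G (GI a t b).
Proof.
  intros H h1 h2. pose proof (prf_grade _ _ HG Htn _ _ _ H) as Hc. unfold unit_int in Hc.
  assert (Hr : LGI_prf tn G (GI b (1 - c + t) b)) by (apply prf_ax, ax_refl; unfold unit_int; lra).
  pose proof (ptrans _ _ HG Htn _ _ _ _ _ H Hr) as H3.
  replace (luk_t c (1 - c + t)) with t in H3; auto.
  unfold luk_t, Rmax; destruct Rle_dec; lra.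
Qed.

Lemma explode tn G (HG : forall P, G P -> wf P) (Htn : is_cont_tnorm tn) X Z :
  LGI_prf tn G X -> LGI_prf tn G (FNot X) -> wf Z -> LGI_prf tn G Z.
Proof.
  intros H1 H2 Hz. pose proof (prf_wf _ _ HG Htn _ H1).
  assert (LGI_prf tn G (FImp X (FImp (FNot X) Z))) by taut_tac.
  exact (prf_mp _ _ _ _ H2 (prf_mp _ _ _ _ H1 H0)).
Qed.

Lemma orelim tn G (HG : forall P, G P -> wf P) (Htn : is_cont_tnorm tn) A B :
  LGI_prf tn G (FOr A B) -> LGI_prf tn G (FNot A) -> LGI_prf tn G B.
Proof.
  intros H1 H2. pose proof (prf_wf _ _ HG Htn _ H1). simpl in H.
  assert (LGI_prf tn G (FImp (FOr A B) (FImp (FNot A) B))) by taut_tac.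
  exact (prf_mp _ _ _ _ H2 (prf_mp _ _ _ _ H1 H0)).
Qed.

Fixpoint ev (tn : R -> R -> R) (val : nat -> R) (a : bexpr) : R :=
  match a with
  | BVar i => val i
  | BBot => 0
  | BTop => 1
  | BAnd a b => Rmin (ev tn val a) (ev tn val b)
  | BOr a b => Rmax (ev tn val a) (ev tn val b)
  | BTn a b => tn (ev tn val a) (ev tn val b)
  | BNeg a => 1 - ev tn val a
  end.

Lemma ev_unit tn val (Htn : is_cont_tnorm tn) (Hv : forall i, unit_int (val i)) a :
  unit_int (ev tn val a).
Proof.
  induction a; simpl; auto; unfold unit_int in *; try lra.
  - unfold Rmin; destruct Rle_dec; lra.
  - unfold Rmax; destruct Rle_dec; lra.
  - apply (tn_closed _ Htn); auto.
Qed.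

Lemma ev_is_eval tn val (Htn : is_cont_tnorm tn) (Hv : forall i, unit_int (val i)) :
  is_eval tn (ev tn val).
Proof.
  repeat split; intros; try reflexivity; try apply ev_unit; auto;
   apply ev_unit; auto.
Qed.

Ltac rm0 := unfold luk_t, luk_s, tconorm in *; unfold Rmax, Rmin, unit_int in *; repeat destruct Rle_dec; lra.
Ltac rm := rm0.
Ltac wk H := eapply weaken; [eassumption|eassumption|exact H| |]; rm.

Lemma pneg tn G (HG : forall P, G P -> wf P) (Htn : is_cont_tnorm tn) a b d :
  LGI_prf tn G (GI a d b) -> LGI_prf tn G (GI (BNeg b) d (BNeg a)).
Proof.
  intro H. apply (prf_mp _ _ _ _ H). apply prf_ax, ax_neg1. eapply prf_grade; eauto.
Qed.

Lemma top_negbot tn G (HG : forall P, G P -> wf P) (Htn : is_cont_tnorm tn) :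
  LGI_prf tn G (GI BTop 1 (BNeg BBot)).
Proof.
  assert (H1 := pneg _ _ HG Htn _ _ _ (prf_ax tn G _ (ax_bot tn (BNeg BTop)))).
  assert (H2 := ptrans _ _ HG Htn _ _ _ _ _ (prf_ax tn G _ (ax_neg3 tn BTop)) H1).
  wk H2.
Qed.

Lemma negtop_bot tn G (HG : forall P, G P -> wf P) (Htn : is_cont_tnorm tn) :
  LGI_prf tn G (GI (BNeg BTop) 1 BBot).
Proof.
  assert (H1 := pneg _ _ HG Htn _ _ _ (prf_ax tn G _ (ax_top tn (BNeg BBot)))).
  assert (H2 := ptrans _ _ HG Htn _ _ _ _ _ H1 (prf_ax tn G _ (ax_neg2 tn BBot))).
  wk H2.
Qed.

Lemma truth tn (Htn : is_cont_tnorm tn) G (HG : forall P, G P -> wf P)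
  val (Hv : forall i, unit_int (val i))
  (HL : forall i c, c < val i -> LGI_prf tn G (GI BTop (Rmax c 0) (BVar i)))
  (HU : forall i c, val i < c -> LGI_prf tn G (GI (BVar i) (Rmax (1 - c) 0) BBot)) :
  forall a,
  (forall c, c < ev tn val a -> LGI_prf tn G (GI BTop (Rmax c 0) a)) /\
  (forall c, ev tn val a < c -> LGI_prf tn G (GI a (Rmax (1 - c) 0) BBot)).
Proof.
  assert (EU := ev_unit tn val Htn Hv).
  induction a as [i| | |a [La Ua] b [Lb Ub]|a [La Ua] b [Lb Ub]|a [La Ua] b [Lb Ub]|a [La Ua]];
    simpl; split; intros c Hc.
  - auto.
  - auto.
  - eapply weaken; [exact HG|exact Htn|apply prf_ax, ax_zero| |]; rm.
  - eapply weaken; [exact HG|exact Htn|apply prf_ax, (ax_refl tn BBot 1)| |]; rm.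
  - eapply weaken; [exact HG|exact Htn|apply prf_ax, (ax_refl tn BTop 1)| |]; rm.
  - eapply weaken; [exact HG|exact Htn|apply prf_ax, ax_zero| |]; rm.
  -
    assert (h1 := La c ltac:(rm)). assert (h2 := Lb c ltac:(rm)).
    apply (mp2 _ _ HG Htn _ _ _ h1 h2). apply prf_ax, ax_and1. eapply prf_grade; eauto.
  -
    unfold Rmin in Hc; destruct Rle_dec.
    + assert (h1 := Ua c Hc).
      assert (h2 := ptrans _ _ HG Htn _ _ _ _ _ (prf_ax tn G _ (ax_and2 tn a b)) h1).
      wk h2.
    + assert (h1 := Ub c Hc).
      assert (h2 := ptrans _ _ HG Htn _ _ _ _ _ (prf_ax tn G _ (ax_and3 tn a b)) h1).
      wk h2.
  -
    unfold Rmax in Hc; destruct Rle_dec.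
    + assert (h1 := Lb c Hc).
      assert (h2 := ptrans _ _ HG Htn _ _ _ _ _ h1 (prf_ax tn G _ (ax_or3 tn a b))).
      wk h2.
    + assert (h1 := La c Hc).
      assert (h2 := ptrans _ _ HG Htn _ _ _ _ _ h1 (prf_ax tn G _ (ax_or2 tn a b))).
      wk h2.
  -
    assert (h1 := Ua c ltac:(rm)). assert (h2 := Ub c ltac:(rm)).
    apply (mp2 _ _ HG Htn _ _ _ h1 h2). apply prf_ax, ax_or1. eapply prf_grade; eauto.
  -
    set (va := ev tn val a) in *. set (vb := ev tn val b) in *.
    destruct (tn_cont _ Htn va vb (EU a) (EU b) (tn va vb - c) ltac:(lra)) as [dl [Hd Hcont]].
    assert (h1 := La (va - dl/2) ltac:(lra)). assert (h2 := Lb (vb - dl/2) ltac:(lra)).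
    assert (g1 := prf_grade _ _ HG Htn _ _ _ h1). assert (g2 := prf_grade _ _ HG Htn _ _ _ h2).
    assert (h3 := mp2 _ _ HG Htn _ _ _ h1 h2 (prf_ax tn G _ (ax_tn1 tn a b _ _ g1 g2))).
    assert (Hx := Hcont _ _ g1 g2).
    assert (ea := EU a). assert (eb := EU b). fold va vb in ea, eb.
    assert (Hr : Rabs (tn (Rmax (va - dl / 2) 0) (Rmax (vb - dl / 2) 0) - tn va vb) < tn va vb - c).
    { apply Hx; apply Rabs_def1; rm. }
    apply Rabs_def2 in Hr.
    assert (t0 := tn_closed _ Htn _ _ g1 g2).
    wk h3.
  -
    set (va := ev tn val a) in *. set (vb := ev tn val b) in *.
    destruct (tn_cont _ Htn va vb (EU a) (EU b) (c - tn va vb) ltac:(lra)) as [dl [Hd Hcont]].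
    assert (h1 := Ua (va + dl/2) ltac:(lra)). assert (h2 := Ub (vb + dl/2) ltac:(lra)).
    assert (g1 := prf_grade _ _ HG Htn _ _ _ h1). assert (g2 := prf_grade _ _ HG Htn _ _ _ h2).
    assert (h3 := mp2 _ _ HG Htn _ _ _ h1 h2 (prf_ax tn G _ (ax_tn2 tn a b _ _ g1 g2))).
    assert (ea := EU a). assert (eb := EU b). fold va vb in ea, eb.
    assert (g1' : unit_int (1 - Rmax (1 - (va + dl / 2)) 0)) by rm.
    assert (g2' : unit_int (1 - Rmax (1 - (vb + dl / 2)) 0)) by rm.
    assert (Hx := Hcont _ _ g1' g2').
    assert (Hr : Rabs (tn (1 - Rmax (1 - (va + dl / 2)) 0) (1 - Rmax (1 - (vb + dl / 2)) 0) - tn va vb) < c - tn va vb).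
    { apply Hx; apply Rabs_def1; rm. }
    apply Rabs_def2 in Hr.
    assert (t0 := tn_closed _ Htn _ _ g1' g2').
    wk h3.
  -
    assert (h1 := Ua (1 - c) ltac:(lra)).
    assert (h2 := ptrans _ _ HG Htn _ _ _ _ _ (top_negbot _ _ HG Htn) (pneg _ _ HG Htn _ _ _ h1)).
    wk h2.
  -
    assert (h1 := La (1 - c) ltac:(lra)).
    assert (h2 := ptrans _ _ HG Htn _ _ _ _ _ (pneg _ _ HG Htn _ _ _ h1) (negtop_bot _ _ HG Htn)).
    wk h2.
Qed.

Lemma density a b : 0 <= a -> a < b -> exists k m, a < INR k / INR (S m) < b.
Proof.
  intros Ha Hab.
  set (z := 2 / (b - a)).
  assert (Hz : z * (b - a) = 2) by (unfold z; field; lra).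
  assert (zpos : 0 < z) by (unfold z; apply Rdiv_lt_0_compat; lra).
  destruct (archimed z) as [M1 M2].
  assert (Mpos : (0 < up z)%Z) by (apply lt_0_IZR; lra).
  set (m := Z.to_nat (up z)).
  assert (Hm : INR m = IZR (up z)) by (unfold m; rewrite INR_IZR_INZ, Z2Nat.id; lia || reflexivity).
  set (N := INR (S m)).
  assert (HN : N = INR m + 1) by (unfold N; rewrite S_INR; reflexivity).
  assert (Npos : 0 < N) by lra.
  assert (Nb : N * (b - a) > 2) by nra.
  destruct (archimed (a * N)) as [K1 K2].
  assert (Kpos : (0 < up (a * N))%Z) by (apply lt_0_IZR; nra).
  exists (Z.to_nat (up (a * N))), m.
  assert (Hk : INR (Z.to_nat (up (a * N))) = IZR (up (a * N))) by (rewrite INR_IZR_INZ, Z2Nat.id; lia || reflexivity).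
  fold N. rewrite Hk.
  set (y := IZR (up (a * N)) / N).
  assert (Hy : y * N = IZR (up (a * N))) by (unfold y; field; lra).
  split; nra.
Qed.

Definition G0 : formula := GI BTop 1 BBot.
Definition Hyp (T : formula -> Prop) (L : list formula) : formula -> Prop := fun P => T P \/ In P L.
Definition Cons tn (G : formula -> Prop) : Prop := ~ LGI_prf tn G G0.

Definition enum (n : nat) : nat * (nat * nat) :=
  let (i, r) := Cantor.of_nat n in (i, Cantor.of_nat r).


Lemma enum_surj i k m : exists n, enum n = (i, (k, m)).
Proof.
  exists (Cantor.to_nat (i, Cantor.to_nat (k, m))). unfold enum.
  rewrite Cantor.cancel_of_to, Cantor.cancel_of_to. reflexivity.
Qed.

Definition atom (p : nat * (nat * nat)) : formula :=
  match p with (i, (k, m)) => GI BTop (Rmin (INR k / INR (S m)) 1) (BVar i) end.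

Lemma atom_wf p : wf (atom p).
Proof.
  destruct p as [i [k m]]. change (unit_int (Rmin (INR k / INR (S m)) 1)). unfold unit_int.
  assert (0 <= INR k / INR (S m)).
  { apply Rle_mult_inv_pos; [apply pos_INR | apply lt_0_INR; lia]. }
  unfold Rmin; destruct Rle_dec; lra.
Qed.

Lemma deduction tn (Htn : is_cont_tnorm tn) G (HG : forall P, G P -> wf P) X (HX : wf X) Y :
  LGI_prf tn (fun P => G P \/ P = X) Y -> LGI_prf tn G (FImp X Y).
Proof.
  assert (HG' : forall P, (G P \/ P = X) -> wf P) by (intros P [H|H]; [auto|subst; auto]).
  induction 1 as [P HA|P HP|P Q H1 IH1 H2 IH2].
  - assert (wf P) by (apply (prf_wf tn (fun _ => False)); [tauto|auto|apply prf_ax; auto]).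
    assert (LGI_prf tn G (FImp P (FImp X P))) by taut_tac.
    exact (prf_mp _ _ _ _ (prf_ax _ _ _ HA) H0).
  - destruct HP as [HP|HP].
    + assert (wf P) by auto.
      assert (LGI_prf tn G (FImp P (FImp X P))) by taut_tac.
      exact (prf_mp _ _ _ _ (prf_hyp _ _ _ HP) H0).
    + subst. taut_tac.
  - assert (W := prf_wf _ _ HG' Htn _ H2). unfold FImp in W; simpl in W.
    assert (LGI_prf tn G (FImp (FImp X P) (FImp (FImp X (FImp P Q)) (FImp X Q)))) by taut_tac.
    exact (prf_mp _ _ _ _ IH2 (prf_mp _ _ _ _ IH1 H)).
Qed.

Lemma split_cons tn (Htn : is_cont_tnorm tn) T L (HT : forall P, Hyp T L P -> wf P) A (HA : wf A) :
  Cons tn (Hyp T L) -> Cons tn (Hyp T (A :: L)) \/ Cons tn (Hyp T (FNot A :: L)).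
Proof.
  intro HC. apply NNPP. intro Hn. apply HC.
  assert (h1 : LGI_prf tn (Hyp T (A :: L)) G0) by (apply NNPP; intro; apply Hn; left; auto).
  assert (h2 : LGI_prf tn (Hyp T (FNot A :: L)) G0) by (apply NNPP; intro; apply Hn; right; auto).
  assert (d1 : LGI_prf tn (Hyp T L) (FImp A G0)).
  { apply deduction; auto. revert h1. apply prf_mono. unfold Hyp; simpl. intros P [h|[h|h]]; auto. }
  assert (d2 : LGI_prf tn (Hyp T L) (FImp (FNot A) G0)).
  { apply deduction; auto. revert h2. apply prf_mono. unfold Hyp; simpl. intros P [h|[h|h]]; auto. }
  assert (LGI_prf tn (Hyp T L) (FImp (FImp A G0) (FImp (FImp (FNot A) G0) G0))).
  { unfold G0. taut_tac. }
  exact (prf_mp _ _ _ _ d2 (prf_mp _ _ _ _ d1 H)).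
Qed.

Fixpoint stage tn T (neg : formula) (n : nat) : list formula :=
  match n with
  | O => neg :: nil
  | S n => let L := stage tn T neg n in let A := atom (enum n) in
      if excluded_middle_informative (Cons tn (Hyp T (A :: L))) then A :: L else FNot A :: L
  end.

Lemma stage_wf tn T neg (Hn : wf neg) n P : In P (stage tn T neg n) -> wf P.
Proof.
  induction n; simpl.
  - intros [h|h]; [subst; auto|contradiction].
  - destruct excluded_middle_informative; simpl; intros [h|h]; auto; subst;
      try apply atom_wf; simpl; apply atom_wf.
Qed.

Lemma stage_cons tn (Htn : is_cont_tnorm tn) T (HT : forall P, T P -> wf P) neg (Hn : wf neg) :
  Cons tn (Hyp T (neg :: nil)) -> forall n, Cons tn (Hyp T (stage tn T neg n)).
Proof.
  intros H0 n. induction n; simpl; auto.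
  destruct excluded_middle_informative as [c|c]; auto.
  destruct (split_cons tn Htn T (stage tn T neg n)) with (A := atom (enum n)) as [h|h]; auto.
  - intros P [h|h]; auto. eapply stage_wf; eauto.
  - apply atom_wf.
  - contradiction.
Qed.

Lemma stage_sub tn T neg n m : (n <= m)%nat -> forall P, In P (stage tn T neg n) -> In P (stage tn T neg m).
Proof.
  induction 1; auto. intros P h. simpl. destruct excluded_middle_informative; right; auto.
Qed.

Definition Ginf tn T neg : formula -> Prop := fun P => T P \/ exists n, In P (stage tn T neg n).

Lemma finite tn T neg P : LGI_prf tn (Ginf tn T neg) P -> exists n, LGI_prf tn (Hyp T (stage tn T neg n)) P.
Proof.
  induction 1 as [P HA|P HP|P Q _ [n1 IH1] _ [n2 IH2]].
  - exists O. now apply prf_ax.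
  - destruct HP as [h|[n h]].
    + exists O. apply prf_hyp. left; auto.
    + exists n. apply prf_hyp. right; auto.
  - exists (Nat.max n1 n2). apply (prf_mp _ _ P).
    + revert IH1; apply prf_mono; intros R [h|h]; [left|right]; auto.
      eapply stage_sub; [|exact h]; lia.
    + revert IH2; apply prf_mono; intros R [h|h]; [left|right]; auto.
      eapply stage_sub; [|exact h]; lia.
Qed.

Lemma decided tn T neg n : Ginf tn T neg (atom (enum n)) \/ Ginf tn T neg (FNot (atom (enum n))).
Proof.
  unfold Ginf. assert (H : In (atom (enum n)) (stage tn T neg (S n)) \/ In (FNot (atom (enum n))) (stage tn T neg (S n))).
  { simpl. destruct excluded_middle_informative; [left|right]; left; auto. }
  destruct H; [left|right]; right; eauto.
Qed.


Theorem mainTheorem6 (tn : R -> R -> R) (Htn : is_cont_tnorm tn)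
  (T : formula -> Prop)
  (HT : forall P, T P -> exists a c b, P = GI a c b /\ unit_int c)
  (zeta eta : bexpr) (e : R) (He : unit_int e) :
  models tn T (GI zeta e eta) ->
  forall t, 0 <= t -> t < e -> LGI_prf tn T (GI zeta t eta).
Proof.
  intros Hmod t Ht0 Hte.
  assert (HTw : forall P, T P -> wf P).
  { intros P HP. destruct (HT P HP) as [a [c [b [-> Hc]]]]. exact Hc. }
  apply NNPP; intro Hno.
  set (Z := GI zeta t eta). set (neg := FNot Z).
  assert (Hnw : wf neg) by (simpl; unfold unit_int in *; lra).
  assert (Cons0 : Cons tn (Hyp T (neg :: nil))).
  { intro H. apply Hno.
    assert (d : LGI_prf tn T (FImp neg G0)).
    { apply deduction; auto. revert H. apply prf_mono. unfold Hyp; simpl. intros P [h|[h|h]]; auto. contradiction. }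
    assert (ink : LGI_prf tn T (FNot G0)) by (apply prf_ax, ax_inkons; unfold unit_int; lra).
    assert (LGI_prf tn T (FImp (FImp (FNot Z) G0) (FImp (FNot G0) Z))).
    { unfold G0, Z. simpl in Hnw. taut_tac. }
    exact (prf_mp _ _ _ _ ink (prf_mp _ _ _ _ d H0)). }
  set (Gi := Ginf tn T neg).
  assert (HGi : forall P, Gi P -> wf P).
  { intros P [h|[n h]]; auto. eapply stage_wf; eauto. }
  assert (ConsI : ~ LGI_prf tn Gi G0).
  { intro h. destruct (finite _ _ _ _ h) as [n hn]. exact (stage_cons tn Htn T HTw neg Hnw Cons0 n hn). }
  set (E := fun i x => 0 <= x <= 1 /\ LGI_prf tn Gi (GI BTop x (BVar i))).
  assert (bnd : forall i, bound (E i)) by (intro i; exists 1; intros x [hx _]; lra).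
  assert (ne : forall i, exists x, E i x).
  { intro i; exists 0; split; [lra|]. apply prf_ax, ax_zero. }
  pose (val := fun i => proj1_sig (completeness (E i) (bnd i) (ne i))).
  assert (Hlub : forall i, is_lub (E i) (val i)) by (intro i; exact (proj2_sig (completeness (E i) (bnd i) (ne i)))).
  assert (Hv : forall i, unit_int (val i)).
  { intro i. destruct (Hlub i) as [h1 h2]. split.
    - apply h1. destruct (ne i) as [x hx]. split; [lra|]. apply prf_ax, ax_zero.
    - apply h2. intros x [hx _]; lra. }
  assert (HL : forall i c, c < val i -> LGI_prf tn Gi (GI BTop (Rmax c 0) (BVar i))).
  { intros i c hc. destruct (Hlub i) as [h1 h2].
    assert (exists x, E i x /\ c < x) as [x [[hx hxp] hcx]].
    { apply NNPP; intro hn. assert (val i <= c); [|lra]. apply h2. intros x hx.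
      apply Rnot_lt_le; intro; apply hn; eauto. }
    wk hxp. }
  assert (HU : forall i c, val i < c -> LGI_prf tn Gi (GI (BVar i) (Rmax (1 - c) 0) BBot)).
  { intros i c hc. destruct (Rle_lt_dec c 1) as [hc1|hc1].
    - assert (hv := Hv i). destruct (density (val i) c) as [k [m [q1 q2]]]; try (unfold unit_int in *; lra).
      destruct (enum_surj i k m) as [n hn].
      destruct (decided tn T neg n) as [h|h]; rewrite hn in h;
        change (atom (i, (k, m))) with (GI BTop (Rmin (INR k / INR (S m)) 1) (BVar i)) in h.
      + exfalso. destruct (Hlub i) as [h1 _].
        assert (Rmin (INR k / INR (S m)) 1 <= val i); [|rm].
        apply h1. split; [|apply prf_hyp; exact h]. rm.
      + assert (w := HGi _ h). change (unit_int (Rmin (INR k / INR (S m)) 1)) in w.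
        assert (hl := prf_ax tn Gi _ (ax_lin2 tn (BVar i) _ w)).
        assert (h3 := orelim _ _ HGi Htn _ _ hl (prf_hyp _ _ _ h)).
        wk h3.
    - assert (h3 := prf_ax tn Gi _ (ax_zero tn (BVar i) BBot)). wk h3. }
  assert (TL := truth tn Htn Gi HGi val Hv HL HU).
  assert (EU := ev_unit tn val Htn Hv).
  assert (Hsat : sat (ev tn val) (GI zeta e eta)).
  { apply Hmod. apply ev_is_eval; auto.
    intros Q HQ. destruct (HT Q HQ) as [a [c [b [-> Hc]]]]. simpl. apply Rnot_lt_le; intro Hlt.
    apply ConsI.
    set (D := ev tn val a - (ev tn val b + 1 - c)).
    assert (h1 := proj1 (TL a) (ev tn val a - D/4) ltac:(unfold D; lra)).
    assert (h2 := proj2 (TL b) (ev tn val b + D/4) ltac:(unfold D; lra)).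
    assert (h0 : LGI_prf tn Gi (GI a c b)) by (apply prf_hyp; left; auto).
    assert (h3 := ptrans _ _ HGi Htn _ _ _ _ _ (ptrans _ _ HGi Htn _ _ _ _ _ h1 h0) h2).
    assert (g := prf_grade _ _ HGi Htn _ _ _ h3).
    assert (ea := EU a). assert (eb := EU b).
    assert (gp : 0 < luk_t (luk_t (Rmax (ev tn val a - D / 4) 0) c) (Rmax (1 - (ev tn val b + D / 4)) 0)).
    { unfold D in *. rm. }
    assert (ink := prf_ax tn Gi _ (ax_inkons tn _ g gp)).
    apply (explode _ _ HGi Htn _ _ h3 ink). simpl; unfold unit_int; lra. }
  simpl in Hsat.
  apply ConsI.
  set (eps := (e - t) / 4).
  assert (h1 := proj2 (TL zeta) (ev tn val zeta + eps) ltac:(unfold eps; lra)).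
  assert (h2 := proj1 (TL eta) (ev tn val eta - eps) ltac:(unfold eps; lra)).
  assert (g1 := prf_grade _ _ HGi Htn _ _ _ h1). assert (g2 := prf_grade _ _ HGi Htn _ _ _ h2).
  assert (h3 := mp2 _ _ HGi Htn _ _ _ h1 h2 (prf_ax tn Gi _ (ax_trans2 tn _ _ _ _ g1 g2))).
  assert (ez := EU zeta). assert (ee := EU eta).
  assert (Heps : eps * 4 = e - t) by (unfold eps; field).
  assert (h4 : LGI_prf tn Gi Z) by (unfold Z; wk h3).
  assert (h5 : LGI_prf tn Gi neg) by (apply prf_hyp; right; exists O; simpl; auto).
  apply (explode _ _ HGi Htn _ _ h4 h5). simpl; unfold unit_int; lra.
Qed.
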